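(* Every weakly CIS graph is $\cap$-weakly triangle.
   Context: A family $\mathcal C$ of maximal cliques is edge covering if every two adjacent vertices lie in a common member; a family $\mathcal S$ of maximal stable sets is non-edge covering if every two distinct non-adjacent vertices lie in a common member. A graph is weakly CIS if there are an edge covering family $\mathcal C$ of maximal cliques and a non-edge covering family $\mathcal S$ of maximal stable sets with $C\cap S\neq\emptyset$ for all $C\in\mathcal C$, $S\in\mathcal S$. A graph $G$ is weakly triangle if there is a non-edge covering family $\mathcal S$ of maximal stable sets of $G$ such that for every $S\in\mathcal S$ and every pair of adjacent vertices $u,v\in V(G)\setminus S$, $u$ and $v$ have a common neighbor in $S$. A graph is $\cap$-weakly triangle if both it and its complement are weakly triangle. *)

(* Defs.v *)
(* A finite simple graph is a symmetric irreflexive relation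
   adj : rel T on a finite vertex type T. *)
From mathcomp Require Import all_boot.
Set Implicit Arguments. Unset Strict Implicit. Unset Printing Implicit Defensive.

Section Graphs.
Variable T : finType.

Definition compl_adj (adj : rel T) : rel T := fun u v => (u != v) && ~~ adj u v.

Definition is_clique (adj : rel T) (C : {set T}) : bool :=
  [forall u in C, forall v in C, (u != v) ==> adj u v].

Definition is_stable (adj : rel T) (S : {set T}) : bool :=
  [forall u in S, forall v in S, ~~ adj u v].

Definition maximal_clique (adj : rel T) (C : {set T}) : bool :=
  maxset (is_clique adj) C.

Definition maximal_stable (adj : rel T) (S : {set T}) : bool :=
  maxset (is_stable adj) S.

Definition edge_covering (adj : rel T) (F : {set {set T}}) : Prop :=
  forall u v, adj u v -> exists2 C, C \in F & (u \in C) && (v \in C).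

Definition non_edge_covering (adj : rel T) (F : {set {set T}}) : Prop :=
  forall u v, u != v -> ~~ adj u v -> exists2 S, S \in F & (u \in S) && (v \in S).

Definition weakly_CIS (adj : rel T) : Prop :=
  exists (FC FS : {set {set T}}),
    [/\ (forall C, C \in FC -> maximal_clique adj C),
        edge_covering adj FC,
        (forall S, S \in FS -> maximal_stable adj S),
        non_edge_covering adj FS &
        (forall C S, C \in FC -> S \in FS -> C :&: S != set0)].

Definition weakly_triangle (adj : rel T) : Prop :=
  exists FS : {set {set T}},
    [/\ (forall S, S \in FS -> maximal_stable adj S),
        non_edge_covering adj FS &
        (forall S u v, S \in FS -> u \notin S -> v \notin S -> adj u v ->
           exists2 w, w \in S & adj u w && adj v w)].

Definition cap_weakly_triangle (adj : rel T) : Prop :=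
  weakly_triangle adj /\ weakly_triangle (compl_adj adj).

End Graphs.

(* Main.v *)
Require Import Defs.
From mathcomp Require Import all_boot.

Lemma clique_stable_compl (T : finType) (adj : rel T) :
  is_clique adj =1 is_stable (compl_adj adj).
Proof.
move=> C; rewrite /is_clique /is_stable /compl_adj.
apply/forallP/forallP => H u; have := H u; move/implyP=> Hu; apply/implyP=> uC;
  have /forallP Hv := Hu uC; apply/forallP=> v; apply/implyP=> vC;
  have := Hv v; move/implyP/(_ vC); by case: (u != v); case: (adj u v).
Qed.

Theorem proposition20 (T : finType) (adj : rel T)
  (adj_sym : symmetric adj) (adj_irr : irreflexive adj) :
  weakly_CIS adj -> cap_weakly_triangle adj.
Proof.
case=> FC [FS [hC eC hS nS inter]]; split.
- exists FS; split => // S u v SF uS vS uv.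
  have [C CF /andP [uC vC]] := eC u v uv.
  have /set0Pn [w /setIP [wC wS]] := inter C S CF SF.
  exists w => //.
  have /maxsetp /forallP Hc := hC C CF.
  have cl : forall x y, x \in C -> y \in C -> x != y -> adj x y.
    by move=> x y xC yC; have /implyP/(_ xC)/forallP/(_ y)/implyP/(_ yC)/implyP := Hc x.
  apply/andP; split; apply: cl => //; apply/eqP => E; subst w.
    by rewrite wS in uS.
  by rewrite wS in vS.
- exists FC; split.
  + by move=> C CF; rewrite /maximal_stable -(maxset_eq _ (@clique_stable_compl T adj)); exact: hC.
  + move=> u v uv /=; rewrite /compl_adj uv /= negbK => a; exact: eC.
  + move=> C u v CF uC vC /andP [uv nuv].
    have [S SF /andP [uS vS]] := nS u v uv nuv.
    have /set0Pn [w /setIP [wC wS]] := inter C S CF SF.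
    exists w => //.
    have /maxsetp /forallP Hs := hS S SF.
    have st : forall x y, x \in S -> y \in S -> ~~ adj x y.
      by move=> x y xS yS; have /implyP/(_ xS)/forallP/(_ y)/implyP/(_ yS) := Hs x.
    rewrite /compl_adj !st // !andbT.
    by apply/andP; split; apply/eqP => E; subst w; [rewrite wC in uC | rewrite wC in vC].
Qed.
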